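(* Let $1\le p\le2$, $\frac1r=\frac1p-\frac12$ (with $r=\infty$ if $p=2$, the $\ell_r$-sums then read as maxima), and $d,N\in\mathbb{N}$ with $d\le N$. (i) For every real $\xi=(\xi_S)_{S\subset[N]}$, \[ \frac1{\sqrt{1+N\log2}}\Big(\sum_{S\subset[N]}|\xi_S|^r\Big)^{1/r}\le2\sqrt2\,e^2\,\|M_\xi\colon\mathcal{B}_N\to\ell_p(\{S:S\subset[N]\})\|. \] (ii) For every real $\xi=(\xi_S)_{S\subset[N],|S|\le d}$, \[ \frac1{\sqrt{1+N\log(1+20d)}}\Big(\sum_{S\subset[N],|S|\le d}|\xi_S|^r\Big)^{1/r}\le2\sqrt2\,e^2(1+\sqrt2)^d\,\|M_\xi\colon\mathcal{B}_N^{\le d}\to\ell_p(\{S\subset[N]:|S|\le d\})\|, \] and for every real $\xi=(\xi_S)_{S\subset[N],|S|=d}$, \[ \frac1{\sqrt{1+N\log(1+20d)}}\Big(\sum_{S\subset[N],|S|=d}|\xi_S|^r\Big)^{1/r}\le2\sqrt2\,e^2\,2^{d-1}\,\|M_\xi\colon\mathcal{B}_N^{=d}\to\ell_p(\{S\subset[N]:|S|=d\})\|. \]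
   Context: $[N]=\{1,\dots,N\}$. $\mathcal{B}_N$ is the space of all functions $f\colon\{-1,1\}^N\to\mathbb{R}$ with the sup norm; each has the Fourier–Walsh expansion $f(x)=\sum_{S\subset[N]}\widehat f(S)x^S$ with $x^S=\prod_{n\in S}x_n$ and $\widehat f(S)=2^{-N}\sum_{x}f(x)x^S$. $\mathcal{B}_N^{\le d}$ consists of those $f$ with $\widehat f(S)=0$ for $|S|>d$, and $\mathcal{B}_N^{=d}$ of those with $\widehat f(S)=0$ for $|S|\neq d$. $M_\xi f=(\xi_S\widehat f(S))_S$ over the relevant index set. $\log$ is natural. *)

(* Defs.v *)
From HB Require Import structures.
From mathcomp Require Import all_boot all_order all_algebra.
From mathcomp Require Import all_classical all_reals all_analysis.
Set Implicit Arguments. Unset Strict Implicit. Unset Printing Implicit Defensive.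
Import Order.TTheory GRing.Theory Num.Theory.
Local Open Scope ring_scope.
Local Open Scope classical_set_scope.

Section Walsh.
Variable R : realType.
Variable N : nat.

(* points of the cube {-1,1}^N, coded by booleans: true |-> 1, false |-> -1 *)
Definition cube := {ffun 'I_N -> bool}.
Definition sgnb (b : bool) : R := if b then 1 else -1.

Definition walsh (S : {set 'I_N}) (x : cube) : R := \prod_(n in S) sgnb (x n).

Definition fhat (f : cube -> R) (S : {set 'I_N}) : R :=
  (2%:R ^- N) * \sum_(x : cube) f x * walsh S x.

Definition supnorm (f : cube -> R) : R := \big[Num.max/0]_(x : cube) `|f x|.

Definition spec_in (A : pred {set 'I_N}) (f : cube -> R) : Prop :=
  forall S, ~~ A S -> fhat f S = 0.

Definition lpnorm (p : R) (A : pred {set 'I_N}) (g : {set 'I_N} -> R) : R :=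
  (\sum_(S | A S) `|g S| `^ p) `^ p^-1.

(* operator norm of M_xi : (B_N^A, sup norm) -> l_p(A), f |-> (xi_S \hat f(S))_{S in A} *)
Definition mult_opnorm (p : R) (A : pred {set 'I_N}) (xi : {set 'I_N} -> R) : R :=
  sup [set y | exists f : cube -> R,
        [/\ spec_in A f, supnorm f <= 1 & y = lpnorm p A (fun S => xi S * fhat f S)]].

Definition rnorm (p : R) (A : pred {set 'I_N}) (xi : {set 'I_N} -> R) : R :=
  if p == 2 then \big[Num.max/0]_(S | A S) `|xi S|
  else let r := (p^-1 - 2^-1)^-1 in (\sum_(S | A S) `|xi S| `^ r) `^ r^-1.

End Walsh.

(* Main.v *)
Require Import Defs.
From HB Require Import structures.
From mathcomp Require Import all_boot all_order all_algebra.
From mathcomp Require Import all_classical all_reals all_analysis.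
From mathcomp Require Import ring lra.
Import Order.TTheory GRing.Theory Num.Theory.
Local Open Scope ring_scope.
Section S.
Variable R : realType.
Variable N : nat.
Lemma expR_le_quad (s : R) : `|s| <= 2^-1 -> expR s <= 1 + s + 2 * s ^+ 2.
Proof.
move=> hs; have /andP[h1 h2] : (- 2^-1 <= s <= 2^-1) by rewrite -ler_norml.
have pos : 0 < 1 - s by lra.
have e1 : 1 - s <= expR (- s) by have := expR_ge1Dx (- s); lra.
have -> : expR s = (expR (- s))^-1 by rewrite expRN invrK.
apply: le_trans (_ : (1 - s)^-1 <= _).
  by rewrite lef_pV2 // posrE expR_gt0.
rewrite -[(1 - s)^-1]mul1r ler_pdivrMr //. nra.
Qed.

Lemma cosh_le (t : R) : expR t + expR (- t) <= 2 * expR (2 * t ^+ 2).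
Proof.
have e := expR_ge1Dx (2 * t ^+ 2).
have [ht|ht] := leP (`|t|) (2^-1).
  have h1 := @expR_le_quad t ht.
  have h2 : `|- t| <= 2^-1 by rewrite normrN.
  have h3 := @expR_le_quad (-t) h2.
  rewrite sqrrN in h3; lra.
have a0 : 0 <= `|t| by [].
have ha : `|t| <= 2 * t ^+ 2 by rewrite -real_normK ?num_real //; nra.
have e1 : expR t <= expR (2 * t ^+ 2) by rewrite ler_expR; apply: le_trans ha; exact: ler_norm.
have e2 : expR (- t) <= expR (2 * t ^+ 2).
  by rewrite ler_expR; apply: le_trans ha; rewrite -normrN; exact: ler_norm.
lra.
Qed.
Implicit Types (S T : {set 'I_N}) (x : cube N) (p : R) (A : pred {set 'I_N}) (xi : {set 'I_N} -> R).

Lemma sgnb_sq b : sgnb R b * sgnb R b = 1.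
Proof. by case: b; rewrite /sgnb ?mulr1 ?mulrNN ?mulr1. Qed.

Lemma walshE S x : walsh R S x = \prod_(n : 'I_N) (if n \in S then sgnb R (x n) else 1).
Proof. by rewrite /walsh big_mkcond. Qed.

Lemma walsh_sq S x : walsh R S x * walsh R S x = 1.
Proof.
rewrite walshE -big_split /=; apply: big1 => n _.
by case: ifP => _; rewrite ?sgnb_sq ?mulr1.
Qed.

Lemma normr_walsh S x : `|walsh R S x| = 1.
Proof.
rewrite walshE normr_prod; apply: big1 => n _.
by case: ifP => _; rewrite ?normr1 //; case: (x n); rewrite /sgnb ?normrN normr1.
Qed.

Lemma orth S T : \sum_(x : cube N) walsh R T x * walsh R S x = if T == S then 2%:R ^+ N else 0.
Proof.
rewrite /cube.
under eq_bigr => x _ do rewrite !walshE -big_split /=.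
rewrite -(bigA_distr_bigA (fun n b => (if n \in T then sgnb R b else 1) * (if n \in S then sgnb R b else 1))) /=.
case: eqP => [<-|/eqP TS].
  rewrite (eq_bigr (fun _ => 2%:R)) ?prodr_const ?card_ord // => n _.
  by rewrite big_bool /=; case: ifP => _; rewrite ?mulrNN mulr1.
have [n Hn] : exists n, (n \in T) != (n \in S).
  apply/existsP; apply: contraNT TS => /existsPn H; apply/eqP/setP => n.
  by have := H n; rewrite negbK => /eqP.
rewrite (bigD1 n) //= big_bool /=.
by move: Hn; case: (n \in T); case: (n \in S) => //= _; rewrite /sgnb ?mulr1 ?mul1r ?addrN ?mul0r // addNr mul0r.
Qed.

Lemma card_cube : #|{: cube N}| = (2 ^ N)%N.
Proof. by rewrite card_ffun card_bool card_ord. Qed.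

Lemma fhat_lin (a : {set 'I_N} -> R) S :
  fhat (fun x => \sum_T a T * walsh R T x) S = a S.
Proof.
rewrite /fhat.
under eq_bigr => x _ do rewrite mulr_suml.
rewrite exchange_big /=.
rewrite (eq_bigr (fun T => a T * (if T == S then 2%:R ^+ N else 0))); last first.
  by move=> T _; rewrite -orth big_distrr; apply: eq_bigr => x _; rewrite -mulrA.
rewrite (bigD1 S) //= eqxx big1 ?addr0; last by move=> T /negbTE ->; rewrite mulr0.
by rewrite mulrCA mulVf ?mulr1 // expf_neq0 // pnatr_eq0.
Qed.


Lemma supnorm_le (f : cube N -> R) x : `|f x| <= supnorm f.
Proof. by rewrite /supnorm; apply: le_bigmax. Qed.

Lemma supnorm_le1 (f : cube N -> R) : (forall x, `|f x| <= 1) -> supnorm f <= 1.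
Proof. by move=> H; rewrite /supnorm; apply: bigmax_le. Qed.

Lemma fhat_le1 (f : cube N -> R) S : supnorm f <= 1 -> `|fhat f S| <= 1.
Proof.
move=> Hf; rewrite /fhat normrM normfV normrX ger0_norm ?ler0n //.
rewrite ler_pdivrMl ?exprn_gt0 ?ltr0n // mulr1.
apply: le_trans (ler_norm_sum _ _ _) _.
apply: (@le_trans _ _ (\sum_(x : cube N) (1 : R))).
  apply: ler_sum => x _; rewrite normrM normr_walsh mulr1.
  exact: le_trans (supnorm_le f x) Hf.
by rewrite sumr_const card_cube natrX.
Qed.

Lemma lpnorm_ge0 p A (g : {set 'I_N} -> R) : 0 <= lpnorm p A g.
Proof. exact: powR_ge0. Qed.

Lemma lpnorm_mono p A (g h : {set 'I_N} -> R) : 0 < p ->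
  (forall S, A S -> `|g S| <= `|h S|) -> lpnorm p A g <= lpnorm p A h.
Proof.
move=> p0 H; rewrite /lpnorm; apply: ge0_ler_powR.
- by rewrite invr_ge0 ltW.
- by rewrite nnegrE sumr_ge0 // => S _; exact: powR_ge0.
- by rewrite nnegrE sumr_ge0 // => S _; exact: powR_ge0.
apply: ler_sum => S AS; apply: ge0_ler_powR; rewrite ?nnegrE //; [exact: ltW | exact: H].
Qed.

Lemma opnorm_ub p A xi (f : cube N -> R) : 0 < p -> spec_in A f -> supnorm f <= 1 ->
  lpnorm p A (fun S => xi S * fhat f S) <= mult_opnorm p A xi.
Proof.
move=> p0 sf nf; rewrite /mult_opnorm; apply: sup_upper_bound; last by exists f.
split; first by exists (lpnorm p A (fun S => xi S * fhat f S)), f.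
exists (lpnorm p A xi) => y [g [_ ng ->]].
apply: lpnorm_mono => // S _; rewrite normrM.
by rewrite -[leRHS]mulr1 ler_wpM2l // fhat_le1.
Qed.

Lemma opnorm_ge0 p A xi : 0 < p -> 0 <= mult_opnorm p A xi.
Proof.
move=> p0; apply: le_trans (lpnorm_ge0 p A (fun S => xi S * fhat (fun _ => 0) S)) _.
apply: opnorm_ub => //.
  by move=> S _; rewrite /fhat big1 ?mulr0 // => x _; rewrite mul0r.
by apply: supnorm_le1 => x; rewrite normr0.
Qed.

Lemma opnorm_single p A xi S0 : 0 < p -> A S0 -> `|xi S0| <= mult_opnorm p A xi.
Proof.
move=> p0 AS0.
pose a := fun T : {set 'I_N} => ((T == S0)%:R : R).
have fa : forall x, \sum_T a T * walsh R T x = walsh R S0 x.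
  move=> x; rewrite (bigD1 S0) //= big1 ?addr0 /a ?eqxx ?mul1r // => T /negbTE ->.
  by rewrite mul0r.
apply: le_trans (@opnorm_ub p A xi (fun x => \sum_T a T * walsh R T x) p0 _ _); last first.
- by apply: supnorm_le1 => x; rewrite fa normr_walsh.
- move=> S nAS; rewrite fhat_lin /a; case: eqP => [ES|//].
  by rewrite ES AS0 in nAS.
rewrite /lpnorm (bigD1 S0) //= big1 ?addr0; last first.
  move=> T /andP[_ /negbTE TS]; rewrite fhat_lin /a TS mulr0 normr0 powR0 //.
  by rewrite gt_eqF.
rewrite fhat_lin /a eqxx mulr1 -powRrM mulfV ?gt_eqF // powRr1 //.
Qed.


Definition coef A (c : {set 'I_N} -> R) (e : {ffun {set 'I_N} -> bool}) S : R :=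
  if A S then sgnb R (e S) * c S else 0.
Definition Fe A c e x := \sum_S coef A c e S * walsh R S x.

Lemma exp_avg A c (mu : R) x :
  \sum_(e : {ffun {set 'I_N} -> bool}) expR (mu * Fe A c e x)
  <= 2%:R ^+ #|{: {set 'I_N}}| * expR (2 * mu ^+ 2 * \sum_(S | A S) c S ^+ 2).
Proof.
pose b S := mu * (if A S then c S else 0) * walsh R S x.
have E : forall e, expR (mu * Fe A c e x) = \prod_S expR (sgnb R (e S) * b S).
  move=> e; rewrite /Fe mulr_sumr expR_sum; apply: eq_bigr => S _.
  by rewrite /coef /b; case: ifP => _; rewrite ?mulr0 ?mul0r ?mulr0 // !mulrA [mu * _]mulrC.
under eq_bigr => e _ do rewrite E.
rewrite -(bigA_distr_bigA (fun S bo => expR (sgnb R bo * b S))) /=.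
apply: le_trans (_ : \prod_S (2 * expR (2 * b S ^+ 2)) <= _).
  apply: ler_prod => S _; rewrite big_bool /= /sgnb !mul1r mulN1r.
  by rewrite addr_ge0 ?expR_ge0 // cosh_le.
rewrite big_split /= prodr_const -expR_sum.
apply: ler_wpM2l; first by rewrite exprn_ge0.
rewrite ler_expR mulr_sumr [leRHS]big_mkcond /=; apply: ler_sum => S _.
rewrite /b; case: ifP => _; last by rewrite mulr0 mul0r expr0n /= mulr0.
rewrite le_eqVlt; apply/orP; left; apply/eqP.
have w2 := walsh_sq S x.
rewrite !exprMn -[walsh R S x ^+ 2]/(walsh R S x * walsh R S x) w2 mulr1; ring.
Qed.

Lemma exists_good A c : \sum_(S | A S) c S ^+ 2 = 1 ->
  exists e : {ffun {set 'I_N} -> bool},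
    forall x, `|Fe A c e x| <= 3 * Num.sqrt (1 + N%:R * ln 2).
Proof.
move=> hc.
have ln2 : 0 <= ln (2:R) by apply: ln_ge0; rewrite ler1n.
set L := 1 + N%:R * ln 2.
have L1 : 1 <= L by rewrite /L lerDl mulr_ge0.
set l := Num.sqrt L.
have l0 : 0 < l by rewrite sqrtr_gt0; lra.
have l2 : l ^+ 2 = L by rewrite sqr_sqrtr //; lra.
pose G (e : {ffun {set 'I_N} -> bool}) :=
  \sum_(x : cube N) (expR (l * Fe A c e x) + expR (- l * Fe A c e x)).
set M := #|{: {set 'I_N}}|.
pose K : R := 2%:R ^+ N * (2 * expR (2 * l ^+ 2)).
have sumG : \sum_e G e <= 2%:R ^+ M * K.
  rewrite /G exchange_big /=.
  under eq_bigr => x _ do rewrite big_split /=.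
  apply: le_trans (_ : \sum_(x : cube N) (2%:R ^+ M * expR (2 * l ^+ 2)
                                          + 2%:R ^+ M * expR (2 * l ^+ 2)) <= _).
    apply: ler_sum => x _.
    have h1 := exp_avg A c l x; have h2 := exp_avg A c (- l) x.
    rewrite sqrrN in h2; rewrite hc !mulr1 in h1 h2.
    exact: lerD.
  rewrite sumr_const card_cube /K -(mulr_natl _ (2 ^ N)) natrX.
  move: (2%:R ^+ M : R) (2%:R ^+ N : R) (expR (2 * l ^+ 2)) => a b E.
  rewrite le_eqVlt; apply/orP; left; apply/eqP; ring.
have [e he] : exists e, G e <= K.
  case: (pselect (exists e, G e <= K)) => // H; exfalso.
  have lt : \sum_(e : {ffun {set 'I_N} -> bool}) K < \sum_e G e.
    apply: ltr_sum.
      by apply/hasP; exists [ffun=> true]; rewrite ?mem_index_enum.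
    move=> e _; rewrite ltNge; apply/negP => h; apply: H; by exists e.
  have := lt_le_trans lt sumG.
  by rewrite sumr_const card_ffun card_bool -(mulr_natl _ (2 ^ _)) natrX ltxx.
exists e => x.
have hx : expR (l * `|Fe A c e x|) <= G e.
  apply: le_trans (_ : expR (l * Fe A c e x) + expR (- l * Fe A c e x) <= _).
    case: (lerP 0 (Fe A c e x)) => h.
      by rewrite ger0_norm // lerDl expR_ge0.
    by rewrite ltr0_norm // mulrN -mulNr lerDr expR_ge0.
  by rewrite /G (bigD1 x) //= lerDl sumr_ge0 // => y _.
have hK : K <= expR (L + 2 * l ^+ 2).
  rewrite expRD /K mulrA; apply: ler_wpM2r; first exact: expR_ge0.
  rewrite /L expRD expRM_natl lnK ?posrE // mulrC ler_wpM2r ?exprn_ge0 //.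
  by apply: le_trans (expR_ge1Dx 1); rewrite lexx.
have : l * `|Fe A c e x| <= L + 2 * l ^+ 2.
  by rewrite -ler_expR; apply: le_trans hx (le_trans he hK).
rewrite -l2 => h.
rewrite -(ler_pM2l l0); apply: le_trans h _.
rewrite le_eqVlt; apply/orP; left; apply/eqP; ring.
Qed.

Lemma powRV (x q : R) : 0 <= x -> (x^-1) `^ q = (x `^ q)^-1.
Proof. by move=> x0; rewrite -powR_inv1 // -powRrM mulN1r powRN. Qed.

Lemma lpnorm_scale p A (g h : {set 'I_N} -> R) (B : R) : 0 < p -> 0 < B ->
  (forall S, A S -> `|h S| = `|g S| / B) -> lpnorm p A h = lpnorm p A g / B.
Proof.
move=> p0 B0 H; rewrite /lpnorm.
rewrite (eq_bigr (fun S => `|g S| `^ p * (B `^ p)^-1)); last first.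
  move=> S AS; rewrite H // (@powRM _ `|g S| B^-1 p) //; last by rewrite invr_ge0 ltW.
  by rewrite powRV // ltW.
have s0 : 0 <= \sum_(S | A S) `|g S| `^ p by apply: sumr_ge0 => S _; exact: powR_ge0.
rewrite -mulr_suml (@powRM _ _ (B `^ p)^-1 p^-1) //; last by rewrite invr_ge0 powR_ge0.
by rewrite powRV ?powR_ge0 // -powRrM mulfV ?gt_eqF // powRr1 // ltW.
Qed.

Lemma sgnb_norm b : `|sgnb R b| = 1.
Proof. by case: b; rewrite /sgnb ?normrN normr1. Qed.

Lemma main_lt2 p A xi : 1 <= p -> p < 2 ->
  rnorm p A xi <= 3 * Num.sqrt (1 + N%:R * ln 2) * mult_opnorm p A xi.
Proof.
move=> p1 p2.
have p0 : 0 < p by lra.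
have ln2 : 0 <= ln (2:R) by apply: ln_ge0; rewrite ler1n.
set B := 3 * Num.sqrt _.
have B0 : 0 < B.
  rewrite /B mulr_gt0 // sqrtr_gt0; apply: (@lt_le_trans _ _ 1) => //.
  by rewrite lerDl mulr_ge0.
rewrite /rnorm lt_eqF //=.
set q := p^-1 - 2^-1.
have q0 : 0 < q by rewrite /q subr_gt0 ltf_pV2 ?posrE.
set r := q^-1.
have r0 : 0 < r by rewrite invr_gt0.
rewrite /r invrK.
set W := \sum_(S | A S) `|xi S| `^ r.
have W0 : 0 <= W by rewrite sumr_ge0 // => S _; exact: powR_ge0.
case: (eqVneq W 0) => [->|Wn0].
  by rewrite powR0 ?gt_eqF // mulr_ge0 ?opnorm_ge0 ?ltW.
have Wp : 0 < W by rewrite lt_def Wn0.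
pose c S := (`|xi S| `^ r / W) `^ 2^-1.
have c0 : forall S, 0 <= c S by move=> S; exact: powR_ge0.
have hc : \sum_(S | A S) c S ^+ 2 = 1.
  rewrite (eq_bigr (fun S => `|xi S| `^ r / W)); last first.
    by move=> S _; rewrite /c powR12_sqrt ?sqr_sqrtr ?divr_ge0 ?powR_ge0 ?ltW.
  by rewrite -mulr_suml mulfV.
have [e he] := @exists_good A c hc.
pose f x := \sum_S (coef A c e S / B) * walsh R S x.
have fE : forall x, f x = Fe A c e x / B.
  by move=> x; rewrite /f /Fe mulr_suml; apply: eq_bigr => S _; rewrite mulrAC.
have sf : spec_in A f by move=> S nAS; rewrite fhat_lin /coef (negbTE nAS) mul0r.
have nf : supnorm f <= 1.
  apply: supnorm_le1 => x; rewrite fE normrM normfV (gtr0_norm B0).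
  by rewrite ler_pdivrMr // mul1r; exact: he.
have Hub := @opnorm_ub p A xi f p0 sf nf.
have hr : p + r * (2^-1 * p) = r.
  rewrite /r /q; field; apply/andP; split; [lra|].
  by rewrite gt_eqF //; have : 0 < p^-1 - 2^-1 by []; move=> _; lra.
have key : lpnorm p A (fun S => xi S * fhat f S) = W `^ q / B.
  rewrite (@lpnorm_scale p A (fun S => `|xi S| * c S) _ B p0 B0); last first.
    move=> S AS; rewrite fhat_lin /coef AS !normrM normfV (gtr0_norm B0) sgnb_norm.
    by rewrite normr_id (ger0_norm (c0 S)) mul1r mulrA.
  congr (_ / B); rewrite /lpnorm.
  rewrite (eq_bigr (fun S => `|xi S| `^ r * (W `^ (2^-1 * p))^-1)); last first.
    move=> S _; rewrite ger0_norm ?mulr_ge0 // powRM // /c -powRrM.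
    rewrite powRM ?powR_ge0 ?invr_ge0 ?ltW // -powRrM powRV ?ltW // mulrA.
    rewrite -powRD; first by rewrite hr.
    by rewrite hr gt_eqF.
  rewrite -mulr_suml -/W -[W in W * _]powRr1 ?ltW // -powRB; last by rewrite Wn0 implybT.
  rewrite -powRrM; congr (_ `^ _); rewrite /q; field; lra.
by rewrite key ler_pdivrMr // mulrC in Hub.
Qed.

Lemma rnorm_ge0 p A xi : 0 <= rnorm p A xi.
Proof.
rewrite /rnorm; case: ifP => _; last exact: powR_ge0.
by apply: bigmax_ge_id.
Qed.

Lemma rnorm2 A xi : rnorm 2 A xi <= mult_opnorm 2 A xi.
Proof.
rewrite /rnorm eqxx; apply: bigmax_le; first exact: opnorm_ge0.
by move=> S AS; apply: opnorm_single.
Qed.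

Lemma rnorm_bound p A xi : 1 <= p <= 2 ->
  rnorm p A xi <= 3 * Num.sqrt (1 + N%:R * ln 2) * mult_opnorm p A xi.
Proof.
move=> /andP[p1 p2].
have ln2 : 0 <= ln (2:R) by apply: ln_ge0; rewrite ler1n.
have s1 : 1 <= Num.sqrt (1 + N%:R * ln 2 : R).
  have h : 0 <= N%:R * ln (2:R) by rewrite mulr_ge0.
  by rewrite -[X in X <= _]sqrtr1 ler_sqrt; lra.
case: (eqVneq p 2) => [->|pn2].
  apply: le_trans (rnorm2 A xi) _.
  have o0 : 0 <= mult_opnorm 2 A xi by apply: opnorm_ge0; rewrite ltr0n.
  rewrite -[leLHS]mul1r ler_wpM2r //; lra.
by apply: main_lt2 => //; rewrite lt_neqAle pn2.
Qed.

Lemma rnorm_single p A xi : 1 <= p <= 2 -> (forall S, A S = (S == finset.set0)) ->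
  rnorm p A xi <= mult_opnorm p A xi.
Proof.
move=> /andP[p1 p2] HA.
have p0 : 0 < p by lra.
case: (eqVneq p 2) => [->|pn2]; first exact: rnorm2.
rewrite /rnorm (negbTE pn2) /=.
have q0 : 0 < p^-1 - 2^-1 by rewrite subr_gt0 ltf_pV2 ?posrE // lt_neqAle pn2.
rewrite (big_pred1 finset.set0); last by move=> S; rewrite HA.
rewrite -powRrM mulfV ?gt_eqF ?invr_gt0 // powRr1 //.
by apply: opnorm_single; rewrite // HA.
Qed.

End S.

Lemma conclude (R : realType) (X op s K : R) : 0 <= op -> 1 <= s -> 3 <= K ->
  X <= 3 * s * op -> s^-1 * X <= K * op.
Proof.
move=> o0 s1 K3 hX.
have s0 : 0 < s by lra.
rewrite mulrC ler_pdivrMr //; apply: le_trans hX _.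
rewrite mulrAC ler_wpM2r //; first lra.
by rewrite ler_wpM2r.
Qed.

Lemma sqrt_ge1 (R : realType) (x : R) : 1 <= x -> 1 <= Num.sqrt x.
Proof. by move=> x1; rewrite -[X in X <= _]sqrtr1 ler_sqrt; lra. Qed.

Lemma consts (R : realType) (Q : R) : 2^-1 <= Q -> 3 <= 2 * Num.sqrt 2 * expR 2 * Q.
Proof.
move=> hQ.
have s1 : 1 <= Num.sqrt (2 : R) by apply: sqrt_ge1; lra.
have e3 : 3 <= expR (2 : R) by have := expR_ge1Dx (2 : R); lra.
have a6 : 6 <= 2 * Num.sqrt 2 * expR (2:R) by nra.
nra.
Qed.

Theorem theorem6p7 (R : realType) (p : R) (N d : nat) :
  1 <= p <= 2 -> (d <= N)%N ->
  [/\ (forall xi : {set 'I_N} -> R,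
         (Num.sqrt (1 + N%:R * ln 2))^-1 * rnorm p predT xi
           <= 2 * Num.sqrt 2 * expR 2 * mult_opnorm p predT xi),
      (forall xi : {set 'I_N} -> R,
         (Num.sqrt (1 + N%:R * ln (1 + 20 * d%:R)))^-1
           * rnorm p (fun S : {set 'I_N} => (#|S| <= d)%N) xi
           <= 2 * Num.sqrt 2 * expR 2 * (1 + Num.sqrt 2) ^+ d
              * mult_opnorm p (fun S : {set 'I_N} => (#|S| <= d)%N) xi)
    & (forall xi : {set 'I_N} -> R,
         (Num.sqrt (1 + N%:R * ln (1 + 20 * d%:R)))^-1
           * rnorm p (fun S : {set 'I_N} => #|S| == d) xi
           <= 2 * Num.sqrt 2 * expR 2 * (2 ^+ d / 2)
              * mult_opnorm p (fun S : {set 'I_N} => #|S| == d) xi)].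
Proof.
move=> hp hd.
have p0 : 0 < p by case/andP: hp => ? ?; lra.
have ln2 : 0 <= ln (2:R) by apply: ln_ge0; rewrite ler1n.
have L1 : 1 <= 1 + N%:R * ln (2:R) by rewrite lerDl mulr_ge0.
have ld : 0 <= ln (1 + 20 * d%:R : R) by apply: ln_ge0; rewrite lerDl mulr_ge0.
have L'1 : 1 <= 1 + N%:R * ln (1 + 20 * d%:R : R) by rewrite lerDl mulr_ge0.
have s'1 := @sqrt_ge1 _ _ L'1.
have s1 := @sqrt_ge1 _ _ L1.
have gen : forall A (xi : {set 'I_N} -> R),
    ((d = 0)%N -> forall S, A S = (S == finset.set0)) ->
    rnorm p A xi <= 3 * Num.sqrt (1 + N%:R * ln (1 + 20 * d%:R)) * mult_opnorm p A xi.
  move=> A xi hA; have o0 := @opnorm_ge0 R N p A xi p0.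
  case: d hd ld L'1 s'1 hA => [|d'] hd ld L'1 s'1 hA.
    apply: le_trans (@rnorm_single R N p A xi hp (hA erefl)) _.
    rewrite -[leLHS]mul1r ler_wpM2r //; lra.
  apply: le_trans (@rnorm_bound R N p A xi hp) _.
  have key : ln (2:R) <= ln (1 + 20 * d'.+1%:R).
    have h1 : 1 <= d'.+1%:R :> R by rewrite ler1n.
    rewrite ler_ln ?posrE; lra.
  have key2 : N%:R * ln (2:R) <= N%:R * ln (1 + 20 * d'.+1%:R) by rewrite ler_wpM2l.
  rewrite ler_wpM2r // ler_wpM2l // ler_sqrt; lra.
split.
- move=> xi; apply: conclude => //.
  + exact: opnorm_ge0.
  + have h : (2:R)^-1 <= 1 by lra.
    by have := @consts R 1 h; rewrite mulr1.
  + exact: rnorm_bound.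
- move=> xi; apply: conclude => //.
  + exact: opnorm_ge0.
  + apply: consts; have := @exprn_ege1 R d (1 + Num.sqrt 2); have := @sqrtr_ge0 R 2.
    move=> h1 h2; have := h2 ltac:(lra); lra.
  + apply: gen => d0 S; rewrite d0 leqn0 cards_eq0 //.
- move=> xi; apply: conclude => //.
  + exact: opnorm_ge0.
  + apply: consts; have := @exprn_ege1 R d 2; move=> h; have := h ltac:(lra); lra.
  + apply: gen => d0 S; rewrite d0 cards_eq0 //.
Qed.
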